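(* Let $N=((V\cup\{s\},A),\tau)$ be an acyclic pre-flow temporal network and $k\in\mathbb{N}$. Then $\min\{k,\lambda_N(s,v)\}=\min\{k,d^-_A(v)\}$ for every $v\in V$, and there exist $k$ pairwise arc-disjoint $\tau$-respecting $s$-arborescences such that each $v\in V$ belongs to exactly $\min\{k,\lambda_N(s,v)\}$ of them.
   Context: A temporal network is a pair $N=(D,\tau)$ where $D=(V\cup\{s\},A)$ is a directed graph (parallel arcs allowed) with a root $s$ that no arc enters, and $\tau:A\to\mathbb{N}$; it is acyclic if $D$ has no directed cycle. For $i\in\mathbb{N}$, $\rho_N^i(v)=\{a \text{ entering } v:\tau(a)\le i\}$, $\delta_N^i(v)=\{a\text{ leaving } v:\tau(a)\le i\}$. $N$ is pre-flow if $|\rho_N^i(v)|\ge|\delta_N^i(v)|$ for all $i\in\mathbb{N}$ and all $v\in V$. $d^-_A(v)$ is the number of arcs entering $v$. A directed path with arcs $a_1,\dots,a_\ell$ in order is $\tau$-respecting if $\tau(a_1)\le\dots\le\tau(a_\ell)$; $\lambda_N(s,v)$ is the maximum number of pairwise arc-disjoint $\tau$-respecting $(s,v)$-paths. An $s$-arborescence is an acyclic subgraph $F=(V'\cup\{s\},A')$, $V'\subseteq V$, in which each vertex of $V'$ has in-degree exactly $1$; it is $\tau$-respecting if every path in it from $s$ is $\tau$-respecting. *)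

(* Defs.v *)
From mathcomp Require Import all_boot.
From Stdlib Require Import ClassicalEpsilon.

Set Implicit Arguments.
Unset Strict Implicit.
Unset Printing Implicit Defensive.

Definition pb (P : Prop) : bool :=
  if excluded_middle_informative P then true else false.

(* A temporal network is given by a finite vertex type T (containing the root s,
   i.e. T = V ∪ {s}), a finite arc type Arc (parallel arcs allowed),
   tail/head maps and a time labelling tau : Arc -> nat. *)
Section TemporalNetwork.
Variables (T Arc : finType) (s : T) (tail head : Arc -> T) (tau : Arc -> nat).

Fixpoint walk (x : T) (p : seq Arc) (y : T) : bool :=
  match p with
  | [::] => x == y
  | a :: p' => (tail a == x) && walk (head a) p' y
  end.

Definition dpath (x : T) (p : seq Arc) (y : T) : bool :=
  walk x p y && uniq (x :: map head p).

Definition tresp (p : seq Arc) : bool := sorted leq (map tau p).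

Definition acyclic_on (A' : {set Arc}) : Prop :=
  forall (x : T) (p : seq Arc), p != [::] -> all (fun a => a \in A') p ->
    ~~ walk x p x.

Definition acyclic : Prop := acyclic_on setT.

Definition rho (i : nat) (v : T) : {set Arc} := [set a | (head a == v) && (tau a <= i)].
Definition delta (i : nat) (v : T) : {set Arc} := [set a | (tail a == v) && (tau a <= i)].

Definition preflow : Prop :=
  forall (i : nat) (v : T), v != s -> #|delta i v| <= #|rho i v|.

Definition indeg (v : T) : nat := #|[set a | head a == v]|.

Definition has_disj_paths (v : T) (m : nat) : Prop :=
  exists P : 'I_m -> seq Arc,
    (forall i, dpath s (P i) v && tresp (P i)) /\
    (forall i j, i != j -> [disjoint P i & P j]).

(* lambda_N(s,v): the maximum such m.  For v <> s every (s,v)-path has an arc,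
   so m <= #|Arc| and the maximum over 0..#|Arc| is the true maximum. *)
Definition lambda (v : T) : nat :=
  \max_(m < #|Arc|.+1 | pb (has_disj_paths v m)) m.

(* F = (V' ∪ {s}, A') with V' ⊆ V is an s-arborescence *)
Definition arborescence (F : {set T} * {set Arc}) : Prop :=
  let: (V', A') := F in
  [/\ s \notin V',
      (forall a, a \in A' -> (tail a \in s |: V') && (head a \in s |: V')),
      acyclic_on A' &
      (forall v, v \in V' -> #|[set a in A' | head a == v]| = 1)].

Definition tresp_arb (F : {set T} * {set Arc}) : Prop :=
  forall (y : T) (p : seq Arc), all (fun a => a \in F.2) p -> dpath s p y -> tresp p.

End TemporalNetwork.

(* Main.v *)
Require Import Defs.
From mathcomp Require Import all_boot zify.
From Stdlib Require Import ClassicalEpsilon.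
Set Implicit Arguments. Unset Strict Implicit. Unset Printing Implicit Defensive.

Section Walks.
Variables (T Arc : finType) (tail head : Arc -> T).

Lemma walk_tail_mem x p y b : walk tail head x p y -> b \in p -> tail b \in x :: map head p.
Proof.
elim: p x => [//|a p IH] x /= /andP[/eqP ta w]; rewrite in_cons => /orP[/eqP->|bp].
  by rewrite ta mem_head.
have := IH _ w bp; rewrite in_cons => /orP[/eqP->|H]; rewrite !in_cons ?eqxx ?orbT //.
by rewrite H !orbT.
Qed.

Lemma walk_to_head x p y x' : walk tail head x p y -> x' \in map head p ->
  exists q, [/\ q != [::], all (fun a => a \in p) q & walk tail head x q x'].
Proof.
elim: p x => [//|a p IH] x /= /andP[ta w]; rewrite in_cons => /orP[/eqP->|xp].
  by exists [:: a]; rewrite /= ta eqxx mem_head.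
have [q [qn qa wq]] := IH _ w xp.
exists (a :: q); split => //=; first by rewrite mem_head /=; apply/allP => b bq; rewrite in_cons (allP qa) ?orbT.
by rewrite ta.
Qed.

Lemma walk_nuniq x p y : walk tail head x p y -> ~~ uniq (x :: map head p) ->
  exists z q, [/\ q != [::], all (fun a => a \in p) q & walk tail head z q z].
Proof.
elim: p x => [|a p IH] x w.
  by rewrite /=.
rewrite cons_uniq negb_and negbK => /orP[xin|nu].
  by have [q [qn qa wq]] := walk_to_head w xin; exists x, q.
move: w => /= /andP[_ w].
have [z [q [qn qa wq]]] := IH _ w nu.
exists z, q; split => //; apply/allP => b bq; rewrite in_cons (allP qa) ?orbT //.
Qed.

Lemma acyc_uniq (A : {set Arc}) x p y : acyclic_on tail head A -> walk tail head x p y ->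
  all (fun a => a \in A) p -> uniq (x :: map head p).
Proof.
move=> ac w al; apply/negPn/negP => nu.
have [z [q [qn qa wq]]] := walk_nuniq w nu.
have : all (fun a => a \in A) q by apply/allP => b bq; exact: (allP al) _ (allP qa _ bq).
by move=> alq; move: (ac z q qn alq); rewrite wq.
Qed.

Lemma walk_last x p y : walk tail head x p y -> p != [::] -> exists2 b, b \in p & head b == y.
Proof.
elim: p x => [//|a p IH] x /= /andP[_ w] _.
case: p IH w => [|a' p'] IH w.
  by exists a; [rewrite mem_head | exact: w].
have [b bp hb] := IH _ w isT; exists b => //; by rewrite in_cons bp orbT.
Qed.

End Walks.

Section Arb.
Variables (T Arc : finType) (s : T) (tail head : Arc -> T).

Lemma no_long_walk (A : {set Arc}) x p y : acyclic_on tail head A -> walk tail head x p y ->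
  all (fun a => a \in A) p -> size p < #|T|.
Proof.
move=> ac w al; have u := acyc_uniq ac w al.
have := max_card (mem (x :: map head p)); rewrite (card_uniqP u) /= size_map.
by [].
Qed.

Lemma arb_path (F : {set T} * {set Arc}) w : arborescence s tail head F -> w \in F.1 ->
  exists p, dpath tail head s p w && all (fun a => a \in F.2) p.
Proof.
case: F => V' A' [sV ends ac indeg1] /= wV.
have claim : forall n, (exists p, walk tail head s p w && all (fun a => a \in A') p) \/
   (exists x p, [/\ x \in V', size p = n, walk tail head x p w & all (fun a => a \in A') p]).
  elim => [|n [L|[x [p [xV sz wp al]]]]]; first by right; exists w, [::]; split => //=.
  - by left.
  have /eqP/cards1P [b bE] := indeg1 x xV.
  have : b \in [set a in A' | head a == x] by rewrite bE set11.
  rewrite inE => /andP [bA hb].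
  have := ends b bA; rewrite !inE => /andP [/orP [ts|tV] _].
    by left; exists (b :: p); rewrite /= ts (eqP hb) wp /= bA.
  by right; exists (tail b), (b :: p); split => //=; rewrite ?sz ?eqxx ?(eqP hb) ?wp ?bA.
case: (claim #|T|) => [[p /andP[wp al]]|[x [p [xV sz wp al]]]].
  exists p; rewrite /dpath wp al /= andbT; exact: acyc_uniq ac wp al.
by have := no_long_walk ac wp al; rewrite sz ltnn.
Qed.

End Arb.

Section Good.
Variables (T Arc : finType) (s : T) (tail head : Arc -> T).

Lemma good_vertex a0 : acyclic tail head -> tail a0 != s ->
  exists v, [/\ v != s, (exists a, tail a == v) & forall b, head b == v -> tail b == s].
Proof.
move=> ac ta0.
case: (boolP [exists v, [&& v != s, [exists a, tail a == v] & [forall b, (head b == v) ==> (tail b == s)]]]).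
  move=> /existsP [v /and3P [vs /existsP [a ta] /forallP H]].
  by exists v; split => // [|b hb]; [exists a | exact: (implyP (H b) hb)].
move=> /existsPn H.
have step : forall u, u != s -> (exists a, tail a == u) -> exists b, (head b == u) && (tail b != s).
  move=> u us [a ta]; have := H u; rewrite us /=.
  have -> : [exists a, tail a == u] by apply/existsP; exists a.
  by rewrite /= negb_forall => /existsP [b]; rewrite negb_imply => hb; exists b.
have claim : forall n, exists x p, [/\ x != s, (exists a, tail a == x), size p = n & walk tail head x p (tail a0)].
  elim => [|n [x [p [xs [a ta] sz wp]]]].
    exists (tail a0), [::]; split => //=. by exists a0. all: try by rewrite eqxx.
  have [|b /andP [hb tb]] := step x xs; first by exists a.
  exists (tail b), (b :: p); split => //=; [by exists b | by rewrite sz | by rewrite eqxx (eqP hb) wp].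
have [x [p [_ _ sz wp]]] := claim #|T|.
have al : all (fun a => a \in [set: Arc]) p by apply/allP => b _; rewrite inE.
by have := no_long_walk ac wp al; rewrite sz ltnn.
Qed.

End Good.

Lemma hall_match (I B : finType) (b0 : B) (c : I -> nat) (t : B -> nat) :
  forall (K : {set I}) (S : {set B}),
  (forall x, #|[set i in K | c i <= x]| <= #|[set b in S | t b <= x]|) ->
  exists g : I -> B, {in K &, injective g} /\
    (forall i, i \in K -> (g i \in S) && (t (g i) <= c i)).
Proof.
move=> K; move: {2}#|K| (erefl #|K|) => n; elim: n K => [|n IH] K cK S H.
  have K0 : K = set0 by apply/eqP; rewrite -cards_eq0 cK.
  by exists (fun _ => b0); split => [i j|i]; rewrite K0 inE.
have /card_gt0P [i1 i1K] : 0 < #|K| by rewrite cK.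
pose i0 := [arg min_(i < i1 in K) c i].
have i0K : i0 \in K by rewrite /i0; case: arg_minnP.
have i0min : forall i, i \in K -> c i0 <= c i by rewrite /i0; case: arg_minnP.
have : 0 < #|[set b in S | t b <= c i0]|.
  apply: leq_trans (H (c i0)); apply/card_gt0P; exists i0; by rewrite inE i0K leqnn.
move=> /card_gt0P [b1]; rewrite inE => /andP [b1S _].
pose bm := [arg min_(b < b1 in S) t b].
have bmS : bm \in S by rewrite /bm; case: arg_minnP.
have bmmin : forall b, b \in S -> t bm <= t b by rewrite /bm; case: arg_minnP.
have bmle : t bm <= c i0.
  have : 0 < #|[set b in S | t b <= c i0]|.
    apply: leq_trans (H (c i0)); apply/card_gt0P; exists i0; by rewrite inE i0K leqnn.
  move=> /card_gt0P [b]; rewrite inE => /andP [bS tb]; exact: leq_trans (bmmin _ bS) tb.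
have cK' : #|K :\ i0| = n by move: cK; rewrite (cardsD1 i0 K) i0K add1n => -[].
have [|g [ginj gS]] := IH (K :\ i0) cK' (S :\ bm).
  move=> x; case: (leqP (c i0) x) => hx.
    have E1 : [set i in K :\ i0 | c i <= x] = [set i in K | c i <= x] :\ i0.
      by apply/setP => i; rewrite !inE andbA.
    have E2 : [set b in S :\ bm | t b <= x] = [set b in S | t b <= x] :\ bm.
      by apply/setP => i; rewrite !inE andbA.
    rewrite E1 E2.
    have := H x; rewrite (cardsD1 i0 [set i in _ | _]) (cardsD1 bm [set b in _ | _]).
    by rewrite !inE i0K bmS hx (leq_trans bmle hx) !add1n ltnS.
  have -> : [set i in K :\ i0 | c i <= x] = set0.
    apply/setP => i; rewrite !inE; apply/negP => /andP [/andP [_ iK] ci].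
    by have := leq_trans (i0min _ iK) ci; rewrite leqNgt hx.
  by rewrite cards0.
exists (fun i => if i == i0 then bm else g i); split.
  move=> i j iK jK /=.
  case: (eqVneq i i0) => [->|ni]; case: (eqVneq j i0) => [->|nj] //.
  - move=> E; have := gS j; rewrite !inE nj jK => /(_ isT) /andP [].
    by rewrite -E eqxx.
  - move=> E; have := gS i; rewrite !inE ni iK => /(_ isT) /andP [].
    by rewrite E eqxx.
  by apply: ginj; rewrite !inE ?ni ?nj.
move=> i iK /=; case: (eqVneq i i0) => [->|ni]; first by rewrite bmS bmle.
have := gS i; rewrite !inE ni iK => /(_ isT) /andP [/andP [_ ->] ->] //.
Qed.

Lemma extend_set (I : finType) (J : {set I}) m : #|J| <= m -> m <= #|I| ->
  exists K : {set I}, J \subset K /\ #|K| = m.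
Proof.
move: {2}(m - #|J|) (erefl (m - #|J|)) => n; elim: n J => [|n IH] J E hJ hm.
  by exists J; split => //; apply/eqP; rewrite eqn_leq hJ /= -subn_eq0 E.
have /card_gt0P [x xJ] : 0 < #|~: J|.
  have h1 := cardsC J; have h2 : #|J| < m by rewrite -subn_gt0 E.
  lia.
rewrite inE in xJ.
have [|||K [sK cK]] := IH (x |: J).
- rewrite cardsU1 xJ add1n; lia.
- rewrite cardsU1 xJ add1n; lia.
- done.
exists K; split => //; apply: subset_trans sK; exact: subsetUr.
Qed.

Lemma myDisjP (T : finType) (A B : {pred T}) :
  (forall x, x \in A -> x \in B -> False) -> [disjoint A & B].
Proof.
move=> H; rewrite disjoint_subset; apply/subsetP => x xA; rewrite inE /=; apply/negP => xB.
exact: H x xA xB.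
Qed.

Section Fam.
Variables (T Arc : finType) (s : T) (head : Arc -> T) (tau : Arc -> nat).

Definition good_family (tail : Arc -> T) k (F : 'I_k -> {set T} * {set Arc}) : Prop :=
  [/\ (forall i, arborescence s tail head (F i)),
      (forall i, tresp_arb s tail head tau (F i)),
      (forall i j, i != j -> [disjoint (F i).2 & (F j).2]) &
      (forall w, w != s -> #|[set i | w \in (F i).1]| = minn k (indeg head w))].

Lemma card_ord_lt k d : #|[set i : 'I_k | i < d]| = minn k d.
Proof.
have hm : minn k d <= k by apply: geq_minl.
have -> : [set i : 'I_k | i < d] = [set widen_ord hm j | j : 'I_(minn k d)].
  apply/setP => i; rewrite !inE; apply/idP/imsetP.
    move=> id; have ilt : i < minn k d by rewrite leq_min ltn_ord id.
    by exists (Ordinal ilt) => //; apply: val_inj.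
  by move=> [j _ ->] /=; apply: leq_trans (ltn_ord j) (geq_minr _ _).
rewrite card_imset ?card_ord //; move=> x y /(congr1 val) /= ?; exact: val_inj.
Qed.

Lemma base_case (tail : Arc -> T) (k : nat) : (forall a, head a != s) -> acyclic tail head ->
  (forall a, tail a == s) -> exists F : 'I_k -> {set T} * {set Arc}, good_family tail F.
Proof.
move=> hs ac ts.
pose In w := [set b | head b == w].
pose r a := index a (enum (In (head a))).
exists (fun i : 'I_k => ([set w | (w != s) && (i < indeg head w)], [set a | r a == i])).
split.
- move=> i; split => /=.
  + by rewrite inE eqxx.
  + move=> a; rewrite !inE => /eqP ra; rewrite ts /= (negbTE (hs a)) /= -ra.
    by rewrite /indeg cardE index_mem mem_enum inE.
  + by move=> x p pn _; apply: (ac x p pn); apply/allP => b _; rewrite inE.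
  + move=> w; rewrite inE => /andP [ws iw].
    have /card_gt0P [a0 _] : 0 < indeg head w by apply: leq_ltn_trans iw.
    apply/eqP/cards1P; exists (nth a0 (enum (In w)) i); apply/setP => a; rewrite !inE.
    have isz : i < size (enum (In w)) by rewrite -cardE.
    apply/idP/idP.
      move=> /andP [/eqP ra /eqP hw]; rewrite -ra /r hw nth_index //.
      by rewrite mem_enum inE hw.
    move=> /eqP ->; have hm : nth a0 (enum (In w)) i \in enum (In w) by apply: mem_nth.
    have : head (nth a0 (enum (In w)) i) == w by move: hm; rewrite mem_enum inE.
    set x := nth a0 _ i in hm *; move=> /eqP hw; rewrite /r hw index_uniq ?enum_uniq ?eqxx //.
- move=> i y [|a [|b p]] //= _ /andP [/andP [_ /andP [/eqP tb _]] _].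
  by have := ts b; rewrite tb (negbTE (hs a)).
- move=> i j ij; apply: myDisjP => a /=; rewrite !inE => /eqP -> /eqP /val_inj E.
  by rewrite E eqxx in ij.
- move=> w ws /=.
  have -> : [set i : 'I_k | w \in [set w0 | (w0 != s) && (i < indeg head w0)]] = [set i : 'I_k | i < indeg head w].
    by apply/setP => i; rewrite !inE ws.
  exact: card_ord_lt.
Qed.
End Fam.

Section Step.
Variables (T Arc : finType) (s : T) (head : Arc -> T) (tau : Arc -> nat).
Variables (tail : Arc -> T) (v : T) (a0 : Arc) (k : nat).
Hypotheses (hs : forall a, head a != s) (ac : acyclic tail head)
  (pf : preflow s tail head tau) (vs : v != s) (inv : forall b, head b == v -> tail b == s).

Definition tail' a := if tail a == v then s else tail a.

Lemma transfer0 x p y : walk tail head x p y -> x != v -> v \notin map head p ->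
  walk tail' head x p y.
Proof.
elim: p x => [//|a p IH] x /= /andP [/eqP ta w] xv.
rewrite in_cons negb_or => /andP [hv np].
by rewrite /tail' ta (negbTE xv) eqxx /=; apply: IH => //; rewrite eq_sym.
Qed.

Lemma transfer1 x a p y : walk tail head x (a :: p) y -> v \notin map head (a :: p) ->
  walk tail' head (if x == v then s else x) (a :: p) y.
Proof.
move=> /= /andP [/eqP ta w]; rewrite in_cons negb_or => /andP [hv np].
by rewrite /tail' ta eqxx /=; apply: transfer0 => //; rewrite eq_sym.
Qed.

Variable F' : 'I_k -> {set T} * {set Arc}.
Hypothesis G' : good_family s head tau tail' F'.

Let In := [set b | head b == v].
Let O i := [set a in (F' i).2 | tail a == v].
Let cmax := \max_a tau a.
Let c i := cmax - \max_(a in O i) (cmax - tau a).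
Let m := minn k #|In|.

Lemma c_le i a : a \in O i -> c i <= tau a.
Proof.
move=> aO; have h1 := @leq_bigmax_cond _ (fun a => a \in O i) (fun a => cmax - tau a) a aO.
have h2 : tau a <= cmax by apply: leq_bigmax.
rewrite /c; lia.
Qed.

Lemma tau_le a : tau a <= cmax.
Proof. exact: leq_bigmax. Qed.

Lemma c_gt i x : x < cmax -> c i <= x -> [exists a in O i, tau a <= x].
Proof.
move=> xc ci; case: (boolP [exists a in O i, tau a <= x]) => // /existsPn H; exfalso.
have : \max_(a in O i) (cmax - tau a) < cmax - x.
  have : \max_(a in O i) (cmax - tau a) <= (cmax - x).-1.
    apply/bigmax_leqP => a aO; have := H a; rewrite aO /= -ltnNge => xa; lia.
  lia.
move: ci; rewrite /c; lia.
Qed.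

Lemma cnt x : #|[set i | [exists a in O i, tau a <= x]]| <= #|[set b | (head b == v) && (tau b <= x)]|.
Proof.
case: G' => _ _ dis _.
pose f i := odflt a0 [pick a in O i | tau a <= x].
have fP : forall i, i \in [set i | [exists a in O i, tau a <= x]] -> (f i \in O i) && (tau (f i) <= x).
  move=> i; rewrite inE => /existsP [a /andP [aO ta]]; rewrite /f.
  case: pickP => [b /andP [bO tb] /=|/(_ a)]; first by rewrite bO tb.
  by rewrite aO ta.
have finj : {in [set i | [exists a in O i, tau a <= x]] &, injective f}.
  move=> i j iS jS E; apply/eqP; apply/negPn/negP => ij.
  have := dis i j ij; have /andP [+ _] := fP i iS; have /andP [+ _] := fP j jS.
  rewrite !inE -E => /andP [fj _] /andP [fi _] /disjointFr /(_ fi).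
  by rewrite fj.
rewrite -(card_in_imset finj).
apply: leq_trans (pf x vs); apply: subset_leq_card; apply/subsetP => b /imsetP [i iS ->].
have /andP [fO ft] := fP i iS; move: fO; rewrite !inE => /andP [_ ->]; exact: ft.
Qed.


Let J := [set i | O i != set0].

Lemma J_le : #|J| <= m.
Proof.
rewrite leq_min; apply/andP; split; first by have := max_card J; rewrite card_ord.
apply: (@leq_trans #|[set i | [exists a in O i, tau a <= cmax]]|).
  apply: subset_leq_card; apply/subsetP => i; rewrite !inE => /set0Pn [a aO].
  by apply/existsP; exists a; rewrite aO tau_le.
apply: leq_trans (cnt cmax) _.
by apply: subset_leq_card; apply/subsetP => b; rewrite !inE => /andP [].
Qed.

Lemma m_le : m <= #|{: 'I_k}|.
Proof. by rewrite card_ord geq_minl. Qed.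

Lemma hallc (K : {set 'I_k}) : J \subset K -> #|K| = m ->
  forall x, #|[set i in K | c i <= x]| <= #|[set b in In | tau b <= x]|.
Proof.
move=> JK cK x; case: (leqP cmax x) => hx.
  have -> : [set b in In | tau b <= x] = In.
    by apply/setP => b; rewrite !inE (leq_trans (tau_le b) hx) andbT.
  have -> : [set i in K | c i <= x] = K :&: [set i | c i <= x] by apply/setP => i; rewrite !inE.
  apply: leq_trans (subset_leq_card (subsetIl K _)) _; rewrite cK; exact: geq_minr.
apply: (@leq_trans #|[set i | [exists a in O i, tau a <= x]]|).
  apply: subset_leq_card; apply/subsetP => i; rewrite !inE => /andP [_ ci].
  exact: c_gt hx ci.
apply: leq_trans (cnt x) _.
by apply: subset_leq_card; apply/subsetP => b; rewrite !inE.
Qed.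

Section Build.
Variables (K : {set 'I_k}) (g : 'I_k -> Arc).
Hypotheses (JK : J \subset K) (cK : #|K| = m) (ginj : {in K &, injective g})
  (gS : forall i, i \in K -> (g i \in In) && (tau (g i) <= c i)).

Let FV i := if i \in K then v |: ((F' i).1 :\ v) else (F' i).1 :\ v.
Let FA i := if i \in K then g i |: ((F' i).2 :\: In) else (F' i).2 :\: In.

Lemma hg i : i \in K -> head (g i) = v.
Proof. by move=> iK; have /andP [+ _] := gS iK; rewrite inE => /eqP. Qed.

Lemma memV i w : (w \in FV i) = if w == v then i \in K else w \in (F' i).1.
Proof.
rewrite /FV; case: (boolP (i \in K)) => Ei; rewrite !inE; case: (eqVneq w v) => //=.
Qed.

Lemma memA i a : (a \in FA i) = if head a == v then (i \in K) && (a == g i) else a \in (F' i).2.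
Proof.
rewrite /FA; case: (boolP (i \in K)) => Ei; rewrite !inE; case: (eqVneq (head a) v) => hv //=.
- by rewrite orbF.
- case: (eqVneq a (g i)) => [E|] //=; by move: hv; rewrite E hg ?eqxx.
Qed.


Lemma arbF i : arborescence s tail head (FV i, FA i).
Proof.
case: G' => arb' _ _ _.
have := arb' i; rewrite [F' i]surjective_pairing => -[sV' ends' _ ind'].
split.
- by rewrite memV eq_sym (negbTE vs).
- move=> a; rewrite memA !inE !memV; case: (eqVneq (head a) v) => hv.
    move=> /andP [Ei /eqP ->]; rewrite (eqP (inv (introT eqP (hg Ei)))) hg // eqxx Ei.
    by rewrite orbT.
  move=> aA; have := ends' a aA; rewrite !inE => /andP [ht hh].
  rewrite hh andbT; case: (eqVneq (tail a) v) => tv.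
    apply/orP; right; apply: (subsetP JK); rewrite inE; apply/set0Pn; exists a.
    by rewrite inE aA tv eqxx.
  by move: ht; rewrite /tail' (negbTE tv).
- move=> x p pn _; have := @ac x p pn; apply; by apply/allP => b _; rewrite inE.
- move=> w; rewrite memV; case: (eqVneq w v) => [->|wv].
    move=> Ei; apply/eqP/cards1P; exists (g i); apply/setP => a; rewrite !inE memA.
    case: (eqVneq (head a) v) => hv /=; first by rewrite Ei andbT.
    rewrite andbF; case: (eqVneq a (g i)) => [E|] //; by move: hv; rewrite E hg ?eqxx.
  move=> wF; rewrite -(ind' w wF); apply: eq_card => a; rewrite !inE memA.
  case: (eqVneq (head a) v) => hv //=.
  by rewrite hv [v == w]eq_sym (negbTE wv) !andbF.
Qed.


Lemma heads_ns p : s \notin map head p.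
Proof. by apply/mapP => -[b _ E]; move: (hs b); rewrite -E eqxx. Qed.

Lemma trF i : tresp_arb s tail head tau (FV i, FA i).
Proof.
case: G' => _ tr' _ _.
move=> y p /= al /andP [wp up].
case: (boolP (v \in map head p)) => vp; last first.
  apply: (tr' i y p).
    apply/allP => a ap; have := allP al a ap; rewrite memA; case: ifP => // /eqP hv.
    by move: vp; rewrite -hv map_f.
  by rewrite /dpath up andbT; apply: transfer0 => //; rewrite eq_sym.
case: p vp al wp up => [//|a p] vp al wp up.
move: (wp) => /= /andP [ta wp'].
have aA : a \in FA i := allP al a (mem_head _ _).
case: (eqVneq (head a) v) => hv.
  have /andP [Ei /eqP ag] : (i \in K) && (a == g i) by move: aA; rewrite memA hv eqxx.
  have vnp : v \notin map head p by move: up; rewrite /= hv => /and3P [_ /negP H _]; apply/negP.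
  case: p vp al wp up wp' vnp => [|b p] vp al wp up wp' vnp; first by [].
  have alp : all (fun a => a \in (F' i).2) (b :: p).
    apply/allP => x xp; have := allP al x; rewrite in_cons xp orbT => /(_ isT).
    rewrite memA; case: ifP => // /eqP hx; by move: vnp; rewrite -hx map_f.
  have trp : tresp tau (b :: p).
    apply: (tr' i y (b :: p) alp); rewrite /dpath.
    have := transfer1 wp'; rewrite hv eqxx => /(_ vnp) ->.
    move: up; rewrite /= => /and3P [_ _ ->]; rewrite andbT.
    by have := heads_ns (b :: p).
  rewrite /tresp /= in trp *; rewrite trp andbT.
  have tb : tail b == v by move: wp' => /= /andP [/eqP -> _]; rewrite hv.
  have bO : b \in O i by rewrite inE tb andbT; exact: (allP alp) _ (mem_head _ _).
  by rewrite ag; have /andP [_ h] := gS Ei; apply: leq_trans h (c_le bO).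
have vp' : v \in map head p by move: vp; rewrite /= in_cons eq_sym (negbTE hv).
have /mapP [b bp hb] := vp'.
have : b \in FA i by apply: (allP al); rewrite in_cons bp orbT.
rewrite memA -hb eqxx => /andP [Ei /eqP bg].
have tb : tail b == s by apply: inv; rewrite -hb.
have := walk_tail_mem wp' bp; rewrite (eqP tb) in_cons => /orP [/eqP E|].
  by move: (hs a); rewrite -E eqxx.
by rewrite (negbTE (heads_ns p)).
Qed.

Lemma disF i j : i != j -> [disjoint FA i & FA j].
Proof.
case: G' => _ _ dis' _ ij; apply: myDisjP => a; rewrite !memA.
case: (eqVneq (head a) v) => hv.
  move=> /andP [Ei /eqP ai] /andP [Ej /eqP aj].
  by have := ginj Ei Ej; rewrite -ai -aj => /(_ erefl) E; rewrite E eqxx in ij.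
by move=> ai aj; have := dis' i j ij => /disjointFr /(_ ai); rewrite aj.
Qed.

Lemma cntF w : w != s -> #|[set i | w \in FV i]| = minn k (indeg head w).
Proof.
case: G' => _ _ _ cnt'.
case: (eqVneq w v) => [->|wv] ws.
  have -> : [set i | v \in FV i] = K by apply/setP => i; rewrite inE memV eqxx.
  by rewrite cK.
by rewrite -(cnt' w ws); apply: eq_card => i; rewrite !inE memV (negbTE wv).
Qed.

Lemma buildF : exists F : 'I_k -> {set T} * {set Arc}, good_family s head tau tail F.
Proof.
exists (fun i => (FV i, FA i)); split => [i|i|i j|w]; [exact: arbF|exact: trF|exact: disF|exact: cntF].
Qed.

End Build.

Lemma step_ex : exists F : 'I_k -> {set T} * {set Arc}, good_family s head tau tail F.
Proof.
have [K [JK cK]] := extend_set J_le m_le.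
have [g [ginj gS]] := hall_match a0 (hallc JK cK).
exact: (buildF JK cK ginj gS).
Qed.

End Step.

Section Main.
Variables (T Arc : finType) (s : T) (head : Arc -> T) (tau : Arc -> nat).
Hypothesis hs : forall a, head a != s.

Lemma back (tail : Arc -> T) v x p y : x != s -> walk (tail' s tail v) head x p y -> walk tail head x p y.
Proof.
elim: p x => [//|a p IH] x xs /= /andP [ta w].
move: ta; rewrite /tail'; case: ifP => [_ /eqP E|_ ->]; first by rewrite E eqxx in xs.
by rewrite /=; apply: IH.
Qed.

Lemma acyc' (tail : Arc -> T) v : acyclic tail head -> acyclic (tail' s tail v) head.
Proof.
move=> ac x p pn al; apply/negP => w'.
have [b bp /eqP hb] := walk_last w' pn.
have xs : x != s by rewrite -hb.
by have := ac x p pn al; rewrite (back xs w').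
Qed.

Lemma pf' (tail : Arc -> T) v : preflow s tail head tau -> preflow s (tail' s tail v) head tau.
Proof.
move=> pf i w ws; apply: leq_trans (pf i w ws); apply: subset_leq_card.
apply/subsetP => a; rewrite !inE /tail'; case: ifP => // tv /andP [/eqP sw].
by rewrite sw eqxx in ws.
Qed.

Lemma meas (tail : Arc -> T) v a1 : v != s -> tail a1 == v ->
  #|[set a | tail' s tail v a != s]| < #|[set a | tail a != s]|.
Proof.
move=> vs ta1; apply: proper_card; apply/properP; split.
  apply/subsetP => a; rewrite !inE /tail'; case: ifP => //; by rewrite eqxx.
by exists a1; rewrite !inE /tail' ?ta1 ?eqxx // (eqP ta1).
Qed.

Lemma main_ind k : forall n (tail : Arc -> T), #|[set a | tail a != s]| <= n ->
  acyclic tail head -> preflow s tail head tau ->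
  exists F : 'I_k -> {set T} * {set Arc}, good_family s head tau tail F.
Proof.
elim => [|n IH] tail hn ac pf;
  (case: (boolP [exists a, tail a != s]) => [/existsP [a0 ta0] | /existsPn H];
   last by apply: base_case => // a; have := H a; rewrite negbK).
  have : 0 < #|[set a | tail a != s]| by apply/card_gt0P; exists a0; rewrite inE.
  by rewrite lt0n; move: hn; rewrite leqn0 => ->.
have [v [vs [a1 ta1] inv]] := good_vertex ac ta0.
have [|||F' G'] := IH (tail' s tail v).
- by rewrite -ltnS; apply: leq_trans (meas vs ta1) hn.
- exact: acyc'.
- exact: pf'.
exact: (step_ex a0 hs ac pf vs inv G').
Qed.

End Main.

Lemma pbE (P : Prop) : pb P = true <-> P.
Proof. by rewrite /pb; case: excluded_middle_informative. Qed.

Section Final.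
Variables (T Arc : finType) (s : T) (tail head : Arc -> T) (tau : Arc -> nat).
Hypotheses (hs : forall a, head a != s) (ac : acyclic tail head) (pf : preflow s tail head tau).

Lemma disj_paths_le v m : v != s -> has_disj_paths s tail head tau v m -> m <= indeg head v.
Proof.
move=> vs [P [HP dis]].
have ex : forall i, exists b, (b \in P i) && (head b == v).
  move=> i; have /andP [/andP [wp _] _] := HP i.
  have pn : P i != [::] by move: wp; case: (P i) => //= /eqP E; rewrite E eqxx in vs.
  by have [b bp hb] := walk_last wp pn; exists b; rewrite bp hb.
pose f i := xchoose (ex i).
have fP i : (f i \in P i) && (head (f i) == v) := xchooseP (ex i).
have finj : injective f.
  move=> i j E; apply/eqP; apply/negPn/negP => ij.
  have /andP [fi _] := fP i; have /andP [fj _] := fP j.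
  by have := dis i j ij => /disjointFr /(_ fi); rewrite E fj.
rewrite -[m]card_ord -(card_imset _ finj) /indeg; apply: subset_leq_card.
apply/subsetP => b /imsetP [i _ ->]; rewrite inE; by have /andP [_ ->] := fP i.
Qed.

Lemma disj_paths_ex v : v != s -> has_disj_paths s tail head tau v (indeg head v).
Proof.
move=> vs.
have [F [arb tr dis cnt]] := main_ind hs (indeg head v) (leqnn _) ac pf.
have E : [set i | v \in (F i).1] = setT.
  by apply/eqP; rewrite eqEcard subsetT /= cardsT card_ord cnt // minnn.
have all_in : forall i, v \in (F i).1.
  move=> i; have : i \in [set i | v \in (F i).1] by rewrite E inE.
  by rewrite inE.
have ex : forall i, exists p, dpath tail head s p v && all (fun a => a \in (F i).2) p.
  by move=> i; apply: arb_path (arb i) (all_in i).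
exists (fun i => xchoose (ex i)); split.
  move=> i; have /andP [dp al] := xchooseP (ex i); rewrite dp /=.
  exact: (tr i v _ al dp).
move=> i j ij; apply: myDisjP => a ai aj.
have /andP [_ ali] := xchooseP (ex i); have /andP [_ alj] := xchooseP (ex j).
by have := dis i j ij => /disjointFr /(_ (allP ali a ai)); rewrite (allP alj a aj).
Qed.

Lemma lambda_eq v : v != s -> lambda s tail head tau v = indeg head v.
Proof.
move=> vs; rewrite /lambda; apply/eqP; rewrite eqn_leq; apply/andP; split.
  by apply/bigmax_leqP => i /pbE H; exact: disj_paths_le vs H.
have dle : indeg head v < #|Arc|.+1 by rewrite ltnS /indeg max_card.
apply: (@leq_bigmax_cond _ _ (fun i : 'I_#|Arc|.+1 => nat_of_ord i) (Ordinal dle)).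
by apply/pbE; exact: disj_paths_ex.
Qed.

End Final.

Theorem mainTheorem2 (T Arc : finType) (s : T) (tail head : Arc -> T)
    (tau : Arc -> nat) (k : nat) :
  (forall a : Arc, head a != s) ->
  acyclic tail head ->
  preflow s tail head tau ->
  (forall v : T, v != s ->
     minn k (lambda s tail head tau v) = minn k (indeg head v)) /\
  (exists F : 'I_k -> {set T} * {set Arc},
     [/\ (forall i, arborescence s tail head (F i)),
         (forall i, tresp_arb s tail head tau (F i)),
         (forall i j, i != j -> [disjoint (F i).2 & (F j).2]) &
         (forall v : T, v != s ->
            #|[set i | v \in (F i).1]| = minn k (lambda s tail head tau v))]).
Proof.
move=> hs ac pf.
have [F [arb tr dis cnt]] := main_ind hs k (leqnn _) ac pf.
split; first by move=> v vs; rewrite lambda_eq.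
by exists F; split => // v vs; rewrite lambda_eq //; exact: cnt.
Qed.
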